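(* Let $(Q,\le_Q)$ be a well-quasi-ordered set. A quasi-ordered sequence over $Q$ is a finite sequence $s=(s_1,\dots,s_m)\in Q^m$ together with a quasi-order $\precsim_s$ on the index set $\{1,\dots,m\}$ such that $i<j$ implies $i\precsim_s j$. For quasi-ordered sequences $s$ (of length $m$) and $t$ (of length $m'$), write $s\le t$ if there is a strictly increasing map $f:\{1,\dots,m\}\to\{1,\dots,m'\}$ such that for all $i,j$, $i\precsim_s j$ if and only if $f(i)\precsim_t f(j)$, and for all $i$, $s_i\le_Q t_{f(i)}$. Then $\le$ is a well-quasi-order on the set of quasi-ordered sequences over $Q$.
   Context: A quasi-order is a reflexive, transitive relation. A well-quasi-order is a quasi-order such that every infinite sequence $x_0,x_1,\dots$ has indices $i<j$ with $x_i\le x_j$. *)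

(* Defs.v *)
(* plain Prop-valued definitions. Indices are 0-based:
   {1..m} of the paper is represented as {0..m-1}. *)

Definition quasi_order {A : Type} (le : A -> A -> Prop) : Prop :=
  (forall x, le x x) /\ (forall x y z, le x y -> le y z -> le x z).

Definition wqo {A : Type} (le : A -> A -> Prop) : Prop :=
  quasi_order le /\
  (forall x : nat -> A, exists i j, i < j /\ le (x i) (x j)).

(* A quasi-ordered sequence over Q: a length m, entries s_0..s_{m-1}
   (values of qs_elt at indices >= m are irrelevant), and a quasi-order
   qs_rel on the index set {0..m-1} extending the natural order. *)
Record qoseq (Q : Type) := QOSeq {
  qs_len : nat;
  qs_elt : nat -> Q;
  qs_rel : nat -> nat -> Prop;
  qs_refl : forall i, i < qs_len -> qs_rel i i;
  qs_trans : forall i j k, i < qs_len -> j < qs_len -> k < qs_len ->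
    qs_rel i j -> qs_rel j k -> qs_rel i k;
  qs_mono : forall i j, i < j -> j < qs_len -> qs_rel i j
}.
Arguments qs_len {Q}.
Arguments qs_elt {Q}.
Arguments qs_rel {Q}.

Definition qoseq_le {Q : Type} (leQ : Q -> Q -> Prop) (s t : qoseq Q) : Prop :=
  exists f : nat -> nat,
    (forall i, i < qs_len s -> f i < qs_len t) /\
    (forall i j, i < j -> j < qs_len s -> f i < f j) /\
    (forall i j, i < qs_len s -> j < qs_len s ->
       (qs_rel s i j <-> qs_rel t (f i) (f j))) /\
    (forall i, i < qs_len s -> leQ (qs_elt s i) (qs_elt t (f i))).

(* Main.v *)
Require Import Defs.
From Stdlib Require Import List Arith Lia Classical ClassicalEpsilon.
Import ListNotations.

Lemma choice_fun {X B : Type} (P : X -> B -> Prop) :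
  (forall n, exists b, P n b) -> exists f, forall n, P n (f n).
Proof.
  intros H. exists (fun n => proj1_sig (constructive_indefinite_description _ (H n))).
  intros n. exact (proj2_sig (constructive_indefinite_description _ (H n))).
Qed.

Lemma least_nat (S : nat -> Prop) : (exists k, S k) -> exists k, S k /\ forall k', S k' -> k <= k'.
Proof.
  intros [k Hk]. revert Hk. induction k as [k IH] using (well_founded_induction lt_wf).
  intros Hk. destruct (classic (exists k', S k' /\ k' < k)) as [[k' [Sk' lt]]|Hn].
  - exact (IH k' lt Sk').
  - exists k. split; auto. intros k' Sk'. destruct (le_lt_dec k k'); auto.
    exfalso; apply Hn; eauto.
Qed.

Lemma mono_lt (u : nat -> nat) : (forall k, u k < u (S k)) -> forall i j, i < j -> u i < u j.
Proof.
  intros Hu i j Hij. induction j. lia.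
  destruct (Nat.eq_dec i j). subst. apply Hu. specialize (IHj ltac:(lia)). specialize (Hu j). lia.
Qed.

Section Higman.
Variable A : Type.
Variable R : A -> A -> Prop.

Inductive emb : list A -> list A -> Prop :=
| emb_nil l : emb [] l
| emb_skip l1 b l2 : emb l1 l2 -> emb l1 (b :: l2)
| emb_cons a l1 b l2 : R a b -> emb l1 l2 -> emb (a :: l1) (b :: l2).

Hypothesis HR : wqo R.

Lemma emb_refl : forall l, emb l l.
Proof. destruct HR as [[Hr _] _]. induction l. constructor. apply emb_cons; auto. Qed.

Lemma emb_trans : forall l2 l3, emb l2 l3 -> forall l1, emb l1 l2 -> emb l1 l3.
Proof.
  destruct HR as [[_ Ht] _].
  intros l2 l3 H. induction H; intros l0 Hx.
  - inversion Hx; constructor.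
  - apply emb_skip. auto.
  - inversion Hx; subst.
    + constructor.
    + apply emb_skip. auto.
    + apply emb_cons. eauto. auto.
Qed.

Definition bad (f : nat -> list A) := ~ exists i j, i < j /\ emb (f i) (f j).
Definition agree (h g : nat -> list A) n := forall i, i < n -> h i = g i.
Definition MinSpec P n h := bad h /\ agree h P n /\
  forall h', bad h' -> agree h' P n -> length (h n) <= length (h' n).

Lemma min_exists P n : bad P -> exists h, MinSpec P n h.
Proof.
  intros HP.
  destruct (least_nat (fun k => exists h, bad h /\ agree h P n /\ length (h n) = k))
    as [k [[h [Hb [Ha Hl]]] Hmin]].
  { exists (length (P n)), P. repeat split; auto. }
  exists h. repeat split; auto. intros h' Hb' Ha'. rewrite Hl. apply Hmin. eauto.
Qed.

Definition inh : inhabited (nat -> list A) := inhabits (fun _ => []).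
Definition step P n := epsilon inh (MinSpec P n).

Variable P0 : nat -> list A.
Hypothesis P0bad : bad P0.

Fixpoint F n : nat -> list A :=
  match n with 0 => step P0 0 | S k => step (F k) (S k) end.

Definition prev n := match n with 0 => P0 | S k => F k end.

Lemma F_spec : forall n, MinSpec (prev n) n (F n).
Proof.
  induction n.
  - simpl; unfold step; apply epsilon_spec. apply min_exists. auto.
  - simpl; unfold step; apply epsilon_spec. apply min_exists. destruct IHn; auto.
Qed.

Lemma F_agree : forall m n i, n <= m -> i <= n -> F m i = F n i.
Proof.
  induction m; intros n i Hn Hi.
  - assert (n = 0) by lia. subst. auto.
  - destruct (Nat.eq_dec n (S m)). subst; auto.
    destruct (F_spec (S m)) as [_ [Ha _]]. simpl prev in Ha.
    rewrite Ha by lia. apply IHm; lia.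
Qed.

Definition g n := F n n.

Lemma g_bad : bad g.
Proof.
  intros [i [j [Hij He]]]. destruct (F_spec j) as [Hb _]. apply Hb.
  exists i, j. split; auto. unfold g in He. rewrite <- (F_agree j i i) in He by lia. auto.
Qed.

Lemma g_min : forall n h, bad h -> agree h g n -> length (g n) <= length (h n).
Proof.
  intros n h Hb Ha. destruct (F_spec n) as [_ [_ Hm]]. apply Hm; auto.
  intros i Hi. rewrite Ha by auto. unfold g. destruct n. lia. simpl.
  symmetry. apply F_agree; lia.
Qed.

Lemma g_nonnil : forall n, g n <> [].
Proof.
  intros n Hn. apply g_bad. exists n, (S n). split. lia. rewrite Hn. constructor.
Qed.

Lemma chain : forall x : nat -> A, exists phi : nat -> nat,
  (forall k, phi k < phi (S k)) /\ (forall k, R (x (phi k)) (x (phi (S k)))).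
Proof.
  intros x. destruct HR as [_ Hg].
  set (term := fun n => forall m, n < m -> ~ R (x n) (x m)).
  assert (HN : exists N, forall n, N <= n -> ~ term n).
  { apply NNPP. intros Hc.
    assert (Hall : forall N, exists n, N <= n /\ term n).
    { intros N. apply NNPP. intros Hn. apply Hc. exists N. intros n Hle Ht. apply Hn. eauto. }
    destruct (choice_fun _ Hall) as [t Ht].
    set (u := fix u k := match k with 0 => t 0 | S k => t (S (u k)) end).
    assert (Hu : forall k, u k < u (S k)).
    { intros k. simpl. destruct (Ht (S (u k))). lia. }
    destruct (Hg (fun k => x (u k))) as [i [j [Hij Hr]]].
    assert (Hterm : term (u i)). { destruct i; simpl; apply Ht. }
    apply (Hterm (u j)). apply mono_lt; auto. auto. }
  destruct HN as [N HN].
  assert (Hnx : forall n, exists m, N <= n -> n < m /\ R (x n) (x m)).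
  { intros n. destruct (le_lt_dec N n).
    - specialize (HN n l). apply NNPP. intros Hc. apply HN. intros m Hm Hr. apply Hc.
      exists m. auto.
    - exists 0. lia. }
  destruct (choice_fun _ Hnx) as [nx Hnx'].
  set (phi := fix phi k := match k with 0 => N | S k => nx (phi k) end).
  assert (Hge : forall k, N <= phi k).
  { induction k. simpl; lia. simpl. destruct (Hnx' (phi k) IHk). lia. }
  exists phi. split; intros k; simpl; apply Hnx'; auto.
Qed.

Lemma higman_good : False.
Proof.
  destruct HR as [[Hrefl Htrans] Hg].
  destruct (g 0) as [|d0 r0] eqn:E0. apply (g_nonnil 0 E0).
  set (hd := fun n => match g n with a :: _ => a | [] => d0 end).
  set (tl := fun n => match g n with _ :: t => t | [] => [] end).
  assert (Hgn : forall n, g n = hd n :: tl n).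
  { intros n. unfold hd, tl. destruct (g n) eqn:E. exfalso; exact (g_nonnil n E). auto. }
  destruct (chain hd) as [phi [Hphi Hphr]].
  assert (Hpm : forall k l, k < l -> phi k < phi l) by (apply mono_lt; auto).
  assert (Hpr : forall k l, k < l -> R (hd (phi k)) (hd (phi l))).
  { intros k l Hkl. induction l. lia. destruct (Nat.eq_dec k l). subst; auto.
    eapply Htrans. apply IHl. lia. auto. }
  assert (Hp0 : forall k, phi 0 <= phi k).
  { intros [|k]. lia. specialize (Hpm 0 (S k)). lia. }
  set (h := fun i => if i <? phi 0 then g i else tl (phi (i - phi 0))).
  assert (Hnb : ~ bad h).
  { intros Hb. assert (Hl := g_min (phi 0) h Hb).
    assert (Ha : agree h g (phi 0)).
    { intros i Hi. unfold h. destruct (Nat.ltb_spec i (phi 0)); auto. lia. }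
    specialize (Hl Ha). unfold h in Hl. rewrite Nat.ltb_irrefl, Nat.sub_diag in Hl.
    rewrite Hgn in Hl. simpl in Hl. lia. }
  apply Hnb. intros [i [j [Hij He]]]. unfold h in He.
  destruct (Nat.ltb_spec i (phi 0)); destruct (Nat.ltb_spec j (phi 0)).
  - apply g_bad. eauto.
  - apply g_bad. exists i, (phi (j - phi 0)). split. specialize (Hp0 (j - phi 0)). lia.
    rewrite (Hgn (phi (j - phi 0))). constructor. auto.
  - lia.
  - apply g_bad. exists (phi (i - phi 0)), (phi (j - phi 0)). split. apply Hpm; lia.
    rewrite (Hgn (phi (i - phi 0))), (Hgn (phi (j - phi 0))). apply emb_cons; auto. apply Hpr. lia.
Qed.

End Higman.

Theorem higman (A : Type) (R : A -> A -> Prop) : wqo R -> wqo (emb A R).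
Proof.
  intros HR. split. split. apply emb_refl; auto. intros x y z H1 H2. eapply emb_trans; eauto.
  intros x. apply NNPP. intros Hc. apply (higman_good A R HR x). exact Hc.
Qed.

Fixpoint blk {A} (L : list (list A)) (p : nat) : nat :=
  match L with [] => 0 | B :: L' => if p <? length B then 0 else S (blk L' (p - length B)) end.

Lemma emb_idx {A} (R : A -> A -> Prop) (d : A) : forall l1 l2, emb A R l1 l2 ->
  exists e, (forall i, i < length l1 -> e i < length l2) /\
    (forall i j, i < j -> j < length l1 -> e i < e j) /\
    (forall i, i < length l1 -> R (nth i l1 d) (nth (e i) l2 d)).
Proof.
  intros l1 l2 H. induction H.
  - exists (fun i => i). simpl. repeat split; intros; lia.
  - destruct IHemb as [e [H1 [H2 H3]]]. exists (fun i => S (e i)). simpl.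
    repeat split; intros. specialize (H1 i H0); lia. specialize (H2 i j H0 H4). lia. auto.
  - destruct IHemb as [e [H1 [H2 H3]]].
    exists (fun i => match i with 0 => 0 | S i' => S (e i') end). simpl.
    repeat split.
    + intros [|i] Hi. lia. specialize (H1 i ltac:(lia)). lia.
    + intros [|i] [|j] Hij Hj; try lia. specialize (H2 i j ltac:(lia) ltac:(lia)). lia.
    + intros [|i] Hi; auto. apply H3. lia.
Qed.

Lemma emb_flat {A} (R : A -> A -> Prop) (d : A) : forall L1 L2, emb (list A) (emb A R) L1 L2 ->
  exists f, (forall i, i < length (concat L1) -> f i < length (concat L2)) /\
    (forall i j, i < j -> j < length (concat L1) -> f i < f j) /\
    (forall i j, i < length (concat L1) -> j < length (concat L1) ->
       (blk L1 i <= blk L1 j <-> blk L2 (f i) <= blk L2 (f j))) /\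
    (forall i, i < length (concat L1) -> R (nth i (concat L1) d) (nth (f i) (concat L2) d)).
Proof.
  intros L1 L2 H. induction H.
  - exists (fun i => i). simpl. repeat split; intros; lia.
  - destruct IHemb as [f [H1 [H2 [H3 H4]]]]. exists (fun i => length b + f i). simpl.
    rewrite length_app. repeat split.
    + intros i Hi. specialize (H1 i Hi); lia.
    + intros i j Hij Hj. specialize (H2 i j Hij Hj). lia.
    + intros Hr. apply H3 in Hr; auto. destruct (Nat.ltb_spec (length b + f i) (length b)); try lia.
      destruct (Nat.ltb_spec (length b + f j) (length b)); try lia.
      rewrite !Nat.add_sub_swap, !Nat.sub_diag by lia. simpl. lia.
    + intros Hr. destruct (Nat.ltb_spec (length b + f i) (length b)); try lia.
      destruct (Nat.ltb_spec (length b + f j) (length b)); try lia.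
      rewrite !Nat.add_sub_swap, !Nat.sub_diag in Hr by lia. simpl in Hr. apply H3; auto. lia.
    + intros i Hi. rewrite app_nth2 by lia. replace (length b + f i - length b) with (f i) by lia. auto.
  - destruct IHemb as [f [H1 [H2 [H3 H4]]]].
    destruct (emb_idx R d _ _ H) as [e [E1 [E2 E3]]].
    exists (fun i => if i <? length a then e i else length b + f (i - length a)).
    simpl. rewrite !length_app. refine (conj _ (conj _ (conj _ _))).
    + intros i Hi. destruct (Nat.ltb_spec i (length a)).
      specialize (E1 i H5). lia. specialize (H1 (i - length a) ltac:(lia)). lia.
    + intros i j Hij Hj. destruct (Nat.ltb_spec i (length a)); destruct (Nat.ltb_spec j (length a)).
      * apply E2; auto.
      * specialize (E1 i H5). lia.
      * lia.
      * specialize (H2 (i - length a) (j - length a) ltac:(lia) ltac:(lia)). lia.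
    + intros i j Hi Hj. destruct (Nat.ltb_spec i (length a)); destruct (Nat.ltb_spec j (length a)).
      * rewrite (proj2 (Nat.ltb_lt _ _) (E1 i H5)), (proj2 (Nat.ltb_lt _ _) (E1 j H6)). lia.
      * rewrite (proj2 (Nat.ltb_lt _ _) (E1 i H5)).
        destruct (Nat.ltb_spec (length b + f (j - length a)) (length b)); lia.
      * rewrite (proj2 (Nat.ltb_lt _ _) (E1 j H6)).
        destruct (Nat.ltb_spec (length b + f (i - length a)) (length b)); lia.
      * destruct (Nat.ltb_spec (length b + f (i - length a)) (length b)); try lia.
        destruct (Nat.ltb_spec (length b + f (j - length a)) (length b)); try lia.
        rewrite !Nat.add_sub_swap, !Nat.sub_diag by lia. simpl.
        specialize (H3 (i - length a) (j - length a) ltac:(lia) ltac:(lia)). lia.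
    + intros i Hi. destruct (Nat.ltb_spec i (length a)).
      * rewrite !app_nth1; auto.
      * rewrite !app_nth2 by lia. replace (length b + f (i - length a) - length b)
          with (f (i - length a)) by lia. apply H4. lia.
Qed.

Lemma blocks_exist {A} (d : A) : forall n (e : nat -> A) (r : nat -> nat -> Prop),
  (forall i, i < n -> r i i) ->
  (forall i j k, i < n -> j < n -> k < n -> r i j -> r j k -> r i k) ->
  (forall i j, i < j -> j < n -> r i j) ->
  exists L, Forall (fun B => B <> []) L /\ length (concat L) = n /\
    (forall i, i < n -> nth i (concat L) d = e i) /\
    (forall i j, i < n -> j < n -> (r i j <-> blk L i <= blk L j)).
Proof.
  induction n; intros e r Hrf Htr Hmo.
  - exists []. simpl. refine (conj (Forall_nil _) (conj eq_refl (conj _ _))); intros; lia.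
  - destruct (IHn (fun i => e (S i)) (fun i j => r (S i) (S j))) as [L [HF [Hlen [Hnth Hblk]]]].
    { intros; apply Hrf; lia. }
    { intros i j k ? ? ? ? ?. apply (Htr _ (S j)); auto; lia. }
    { intros; apply Hmo; lia. }
    destruct (classic (0 < n /\ r 1 0)) as [[Hn H10]|Hno].
    + destruct L as [|B L1]. simpl in Hlen; lia.
      inversion HF as [|? ? HB HF1]; subst.
      destruct B as [|b B']. congruence.
      exists ((e 0 :: b :: B') :: L1). refine (conj _ (conj _ (conj _ _))).
      * constructor; auto. congruence.
      * simpl in *. lia.
      * intros [|i] Hi. reflexivity. simpl. apply (Hnth i). lia.
      * assert (Hb0 : blk ((b :: B') :: L1) 0 = 0) by reflexivity.
        assert (Hs : forall p, blk ((e 0 :: b :: B') :: L1) (S p) = blk ((b :: B') :: L1) p)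
          by reflexivity.
        intros [|i] [|j] Hi Hj; rewrite ?Hs; change (blk ((e 0 :: b :: B') :: L1) 0) with 0.
        -- split; intros; [lia | apply Hrf; lia].
        -- split; intros; [lia | apply Hmo; lia].
        -- assert (r (S i) 0 -> r (S i) 1) by (intros; apply (Htr _ 0); try lia; auto; apply Hmo; lia).
           assert (r (S i) 1 -> r (S i) 0) by (intros; apply (Htr _ 1); try lia; auto).
           assert (r (S i) 1 <-> blk ((b :: B') :: L1) i <= blk ((b :: B') :: L1) 0)
             by (apply (Hblk i 0); lia).
           rewrite Hb0 in *. tauto.
        -- apply Hblk; lia.
    + exists ([e 0] :: L). refine (conj _ (conj _ (conj _ _))).
      * constructor; auto. congruence.
      * simpl in *. lia.
      * intros [|i] Hi. reflexivity. simpl. apply (Hnth i). lia.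
      * assert (Hs : forall p, blk ([e 0] :: L) (S p) = S (blk L p))
          by (intros; simpl; rewrite Nat.sub_0_r; reflexivity).
        assert (H0 : blk ([e 0] :: L) 0 = 0) by reflexivity.
        intros [|i] [|j] Hi Hj; rewrite ?Hs, ?H0.
        -- split; intros; [lia|apply Hrf; lia].
        -- split; intros; [lia|apply Hmo; lia].
        -- split; intros HH; [|lia]. exfalso. apply Hno. split. lia.
           destruct i. auto. apply (Htr _ (S (S i))); auto; try lia. apply Hmo; lia.
        -- rewrite <- Nat.succ_le_mono. apply Hblk; lia.
Qed.

Theorem lemma7 (Q : Type) (leQ : Q -> Q -> Prop) :
  wqo leQ -> wqo (qoseq_le leQ).
Proof.
  intros HQ. pose proof (higman _ _ HQ) as H1. pose proof (higman _ _ H1) as [_ H2].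
  destruct HQ as [[Hrefl Htrans] _].
  split. split.
  - intros s. exists (fun i => i). repeat split; auto.
  - intros s t u [f [F1 [F2 [F3 F4]]]] [g [G1 [G2 [G3 G4]]]].
    exists (fun i => g (f i)). refine (conj _ (conj _ (conj _ _))).
    + auto.
    + intros i j Hij Hj. apply G2; auto.
    + intros i j Hi Hj. split; intros Hr.
      * apply G3; auto. apply F3; auto.
      * apply F3; auto. apply G3; auto.
    + intros i Hi. eapply Htrans. apply F4; auto. apply G4; auto.
  - intros x. set (d := qs_elt (x 0) 0).
    destruct (choice_fun (fun n L => Forall (fun B => B <> []) L /\
        length (concat L) = qs_len (x n) /\
        (forall i, i < qs_len (x n) -> nth i (concat L) d = qs_elt (x n) i) /\
        (forall i j, i < qs_len (x n) -> j < qs_len (x n) ->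
           (qs_rel (x n) i j <-> blk L i <= blk L j)))) as [Bx HBx].
    { intros n. apply blocks_exist. apply qs_refl. apply qs_trans. apply qs_mono. }
    destruct (H2 Bx) as [i [j [Hij Hemb]]].
    destruct (emb_flat leQ d _ _ Hemb) as [f [F1 [F2 [F3 F4]]]].
    destruct (HBx i) as [_ [Li [Ni Ri]]]. destruct (HBx j) as [_ [Lj [Nj Rj]]].
    exists i, j. split; auto. exists f. rewrite <- Li in *. rewrite <- Lj in *.
    refine (conj _ (conj _ (conj _ _))).
    + auto.
    + auto.
    + intros a b Ha Hb. split; intros Hr.
      * apply Rj; auto. apply F3; auto. apply Ri; auto.
      * apply Ri; auto. apply F3; auto. apply Rj; auto.
    + intros k Hk. rewrite <- Ni, <- Nj by auto. auto.
Qed.
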